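(* Let $\Bbbk$ be a field, let $M$ be an $n\times m$ integer matrix of rank $m$, and let $I(M)=\langle x^{\mu_+}-x^{\mu_-}\mid \mu \text{ a column of } M\rangle\subseteq\Bbbk[x_1,\dots,x_n]$. Let $\tau\subseteq\{1,\dots,n\}$ and $P=\mathbb{N}^\tau\times\mathbb{Z}^{\bar\tau}$. Then $u,v\in P$ are connected in $\mathscr{G}_P(\Bbbk[P]\cdot I(M))$ if and only if they are connected in $G_P(M)$.
   Context: For $\mu\in\mathbb{Z}^n$, $(\mu_+)_k=\max(\mu_k,0)$ and $(\mu_-)_k=\max(-\mu_k,0)$. $\bar\tau=\{1,\dots,n\}\setminus\tau$; $P=\mathbb{N}^\tau\times\mathbb{Z}^{\bar\tau}=\{u\in\mathbb{Z}^n\mid u_i\ge 0 \text{ for } i\in\tau\}$, with monoid ring $\Bbbk[P]=\Bbbk[x_j^{\pm1}\mid j\notin\tau][x_i\mid i\in\tau]$. For $Q\subseteq\mathbb{Z}^n$, the graph $G_Q(M)$ has vertex set $Q$, with $u,v$ adjacent iff $u-v$ or $v-u$ is a column of $M$. For a binomial ideal $I\subseteq\Bbbk[P]$, the graph $\mathscr{G}_P(I)$ has vertex set $P$ and an edge between $u,v\in P$ iff $x^u-\rho x^v\in I$ for some nonzero $\rho\in\Bbbk$. *)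

(* Defs.v *)
From HB Require Import structures.
From mathcomp Require Import all_boot all_order all_algebra.
From mathcomp Require Import fraction.
From mathcomp Require Import mpoly.
From Stdlib Require Import Relations.Relation_Operators.

Set Implicit Arguments.
Unset Strict Implicit.
Unset Printing Implicit Defensive.

Import Order.TTheory GRing.Theory Num.Theory.
Local Open Scope ring_scope.

(* The Laurent-type ring k[P] = k[x_j^{+-1} | j notin tau][x_i | i in tau]
   is realised as a subring of the fraction field of k[x]. *)

Notation "x %:F" := (@FracField.tofrac _ x) (at level 1, format "x %:F") : ring_scope.

Section Defs.
Variables (K : fieldType) (n m : nat).

Local Notation poly := {mpoly K[n]}.
Local Notation frac := {fraction poly}.

Definition vpos (mu : 'cV[int]_n) (i : 'I_n) : nat := absz (Num.max (mu i 0) 0).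
Definition vneg (mu : 'cV[int]_n) (i : 'I_n) : nat := absz (Num.max (- mu i 0) 0).

Definition xmon (a : 'I_n -> nat) : poly := \prod_(i < n) 'X_i ^+ a i.

Definition binom (mu : 'cV[int]_n) : poly := xmon (vpos mu) - xmon (vneg mu).

Definition in_IM (M : 'M[int]_(n, m)) (f : poly) : Prop :=
  exists a : 'I_m -> poly, f = \sum_(j < m) a j * binom (col j M).

Definition lmon (u : 'cV[int]_n) : frac := \prod_(i < n) ('X_i)%:F ^ (u i 0).

Definition inP (tau : {set 'I_n}) (u : 'cV[int]_n) : Prop :=
  forall i, i \in tau -> 0 <= u i 0.

Definition in_kP (tau : {set 'I_n}) (f : frac) : Prop :=
  exists (p : poly) (c : 'I_n -> nat),
    (forall i, i \in tau -> c i = 0%N) /\ f = p%:F / (xmon c)%:F.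

Definition in_ext (tau : {set 'I_n}) (M : 'M[int]_(n, m)) (f : frac) : Prop :=
  exists s : seq (frac * poly),
    (forall q, q \in s -> in_kP tau q.1 /\ in_IM M q.2) /\
    f = \sum_(q <- s) q.1 * (q.2)%:F.

Definition scrG_edge (tau : {set 'I_n}) (M : 'M[int]_(n, m)) (u v : 'cV[int]_n) : Prop :=
  inP tau u /\ inP tau v /\
  exists rho : K, rho != 0 /\ in_ext tau M (lmon u - rho%:MP%:F * lmon v).

Definition GP_edge (tau : {set 'I_n}) (M : 'M[int]_(n, m)) (u v : 'cV[int]_n) : Prop :=
  inP tau u /\ inP tau v /\
  exists j : 'I_m, u - v = col j M \/ v - u = col j M.

Definition connected (E : 'cV[int]_n -> 'cV[int]_n -> Prop) (u v : 'cV[int]_n) : Prop :=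
  clos_refl_sym_trans _ E u v.

End Defs.

(* Main.v *)
Require Import Defs.
From HB Require Import structures.
From mathcomp Require Import all_boot all_order all_algebra.
From mathcomp Require Import fraction.
From mathcomp Require Import mpoly.
From mathcomp Require Import zify ring.
From Stdlib Require Import Relations.Relation_Operators ClassicalEpsilon.
Import Order.TTheory GRing.Theory Num.Theory.
Local Open Scope ring_scope.

Section S.
Variables (K : fieldType) (n m : nat) (M : 'M[int]_(n, m)) (tau : {set 'I_n}).
Local Notation poly := {mpoly K[n]}.
Local Notation frac := {fraction poly}.

Definition lprod (z : 'I_n -> int) : frac := \prod_(i < n) (('X_i : poly)%:F) ^ z i.

Lemma X_neq0 i : ('X_i : poly) != 0.
Proof.
apply/eqP => h; have := @mcoeffXU n K i i; rewrite h mcoeff0 eqxx => /eqP.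
by rewrite eq_sym oner_eq0.
Qed.

Lemma Xf_neq0 i : (('X_i : poly)%:F) != 0.
Proof. by rewrite tofrac_eq0 X_neq0. Qed.

Lemma lprodD (z1 z2 : 'I_n -> int) :
  lprod (fun i => z1 i + z2 i) = lprod z1 * lprod z2.
Proof. by rewrite /lprod -big_split; apply: eq_bigr => i _; rewrite expfzDr ?Xf_neq0. Qed.

Lemma lprod_ext (z1 z2 : 'I_n -> int) : (forall i, z1 i = z2 i) -> lprod z1 = lprod z2.
Proof. by move=> h; apply: eq_bigr => i _; rewrite h. Qed.

Lemma lprod_nat (a : 'I_n -> nat) : lprod (fun i => (a i)%:Z) = (xmon K a)%:F.
Proof. by rewrite /xmon rmorph_prod; apply: eq_bigr => i _; rewrite rmorphXn. Qed.

Lemma lmonE (u : 'cV[int]_n) : lmon K u = lprod (fun i => u i 0).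
Proof. by []. Qed.

Lemma xmonD (a b : 'I_n -> nat) : xmon K (fun i => a i + b i)%N = xmon K a * xmon K b.
Proof. by rewrite /xmon -big_split; apply: eq_bigr => i _; rewrite exprD. Qed.

Lemma xmon_neq0 (a : 'I_n -> nat) : xmon K a != 0.
Proof. by apply/prodf_neq0 => i _; rewrite expf_neq0 // X_neq0. Qed.

Lemma xmonf_neq0 (a : 'I_n -> nat) : (xmon K a)%:F != 0.
Proof. by rewrite tofrac_eq0 xmon_neq0. Qed.

Definition mnmf (a : 'I_n -> nat) : 'X_{1..n} := [multinom a i | i < n].

Lemma xmon_X (a : 'I_n -> nat) : xmon K a = 'X_[mnmf a].
Proof. by rewrite mpolyXE_id; apply: eq_bigr => i _; rewrite mnmE. Qed.

Definition phi (cb : 'X_{1..n} -> bool) (p : poly) : K :=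
  \sum_(k <- msupp p) (cb k)%:R * p@_k.

Lemma phi_sup (cb : 'X_{1..n} -> bool) (p : poly) (s : seq 'X_{1..n}) : uniq s -> {subset msupp p <= s} ->
  \sum_(k <- s) (cb k)%:R * p@_k = phi cb p.
Proof.
move=> us sub; rewrite (bigID (fun k => k \in msupp p)) /=.
rewrite [X in _ + X]big1 ?addr0; last first.
  by move=> k; rewrite mcoeff_msupp negbK => /eqP ->; rewrite mulr0.
rewrite -big_filter; apply: perm_big; apply: uniq_perm; rewrite ?filter_uniq //.
by move=> k; rewrite mem_filter; case hk: (k \in msupp p); rewrite ?(sub _ hk).
Qed.

Lemma phiD (cb : 'X_{1..n} -> bool) (p q : poly) : phi cb (p + q) = phi cb p + phi cb q.
Proof.
set s := undup (msupp p ++ msupp q ++ msupp (p + q)).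
have us : uniq s by apply: undup_uniq.
rewrite -!(phi_sup cb _ s us); first last.
- by move=> k hk; rewrite mem_undup !mem_cat hk ?orbT.
- by move=> k hk; rewrite mem_undup !mem_cat hk ?orbT.
- by move=> k hk; rewrite mem_undup !mem_cat hk ?orbT.
by rewrite -big_split; apply: eq_bigr => k _; rewrite mcoeffD mulrDr.
Qed.

Lemma phi0 (cb : 'X_{1..n} -> bool) : phi cb 0 = 0.
Proof.
rewrite -(phi_sup cb 0 [::]) ?big_nil //.
by move=> k; rewrite mcoeff_msupp mcoeff0 eqxx.
Qed.

Lemma phiZ (cb : 'X_{1..n} -> bool) (c : K) (p : poly) : phi cb (c *: p) = c * phi cb p.
Proof.
set s := undup (msupp p ++ msupp (c *: p)).
have us : uniq s by apply: undup_uniq.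
rewrite -!(phi_sup cb _ s us); first last.
- by move=> k hk; rewrite mem_undup !mem_cat hk ?orbT.
- by move=> k hk; rewrite mem_undup !mem_cat hk ?orbT.
by rewrite big_distrr; apply: eq_bigr => k _; rewrite mcoeffZ mulrCA.
Qed.

Lemma phiB (cb : 'X_{1..n} -> bool) (p q : poly) : phi cb (p - q) = phi cb p - phi cb q.
Proof. by rewrite phiD -scaleN1r phiZ mulN1r. Qed.

Lemma phi_sum (cb : 'X_{1..n} -> bool) I (r : seq I) (P : pred I) (F : I -> poly) :
  phi cb (\sum_(i <- r | P i) F i) = \sum_(i <- r | P i) phi cb (F i).
Proof. exact: (big_morph (phi cb) (phiD cb) (phi0 cb)). Qed.

Lemma phiX (cb : 'X_{1..n} -> bool) (k : 'X_{1..n}) : phi cb 'X_[k] = (cb k)%:R.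
Proof. by rewrite /phi msuppX big_seq1 mcoeffX eqxx mulr1. Qed.

Lemma phi_Xbin (cb : 'X_{1..n} -> bool) (a b : 'X_{1..n}) (h : poly) : (forall k, cb (k + a)%MM = cb (k + b)%MM) ->
  phi cb (h * ('X_[a] - 'X_[b])) = 0.
Proof.
move=> hc; rewrite {1}(mpolyE h) mulr_suml phi_sum big1 // => k _.
by rewrite -scalerAl phiZ mulrBr -!mpolyXD phiB !phiX hc subrr mulr0.
Qed.


Lemma in_IM_add (f g : poly) : in_IM M f -> in_IM M g -> in_IM M (f + g).
Proof.
move=> [a ->] [b ->]; exists (fun j => a j + b j).
by rewrite -big_split; apply: eq_bigr => j _; rewrite mulrDl.
Qed.

Lemma in_IM_mul (h g : poly) : in_IM M g -> in_IM M (h * g).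
Proof.
move=> [a ->]; exists (fun j => h * a j).
by rewrite mulr_sumr; apply: eq_bigr => j _; rewrite mulrA.
Qed.

Lemma clear_den (s : seq (frac * poly)) :
  (forall q, q \in s -> in_kP tau q.1 /\ in_IM M q.2) ->
  exists D : 'I_n -> nat, (forall i, i \in tau -> D i = 0%N) /\
  exists G, in_IM M G /\ (xmon K D)%:F * \sum_(q <- s) q.1 * (q.2)%:F = G%:F.
Proof.
elim: s => [|q s IH] hs.
  exists (fun _ => 0%N); split=> //; exists 0; split.
    by exists (fun _ => 0); rewrite big1 // => j _; rewrite mul0r.
  by rewrite big_nil mulr0 rmorph0.
have [[p [c [hc hq]]] hI] := hs q (mem_head _ _).
have [D [hD [G [hG hE]]]] := IH (fun q' h => hs q' (@mem_behead _ (q :: s) q' h)).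
exists (fun i => D i + c i)%N; split.
  by move=> i hi; rewrite hD ?hc.
exists (xmon K D * p * q.2 + xmon K c * G); split.
  by apply: in_IM_add; apply: in_IM_mul.
rewrite big_cons hq xmonD !rmorphD !rmorphM /= -hE.
have hc0 := xmonf_neq0 c.
rewrite mulrDr -!mulrA; congr (_ + _); last by rewrite mulrCA.
by congr (_ * _); rewrite mulrCA mulVKf.
Qed.

Definition pb (P : Prop) : bool := if excluded_middle_informative P then true else false.

Lemma pbE (P : Prop) : pb P = true <-> P.
Proof. by rewrite /pb; case: excluded_middle_informative. Qed.

Definition shift (D : 'I_n -> nat) (k : 'X_{1..n}) : 'cV[int]_n :=
  \col_i ((k i)%:Z - (D i)%:Z).


Lemma pb_eq (P Q : Prop) : (P <-> Q) -> pb P = pb Q.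
Proof.
move=> h; rewrite /pb; case: excluded_middle_informative => hP;
  case: excluded_middle_informative => hQ //; exfalso; tauto.
Qed.

Lemma shift_edge (D : 'I_n -> nat) k j : (forall i, i \in tau -> D i = 0%N) ->
  GP_edge tau M (shift D (k + mnmf (vpos (col j M))))%MM
                (shift D (k + mnmf (vneg (col j M))))%MM.
Proof.
move=> hD; split; [|split].
- by move=> i hi; rewrite mxE hD // subr0.
- by move=> i hi; rewrite mxE hD // subr0.
exists j; left; apply/matrixP => i j0; rewrite ord1 !mxE !mnmDE !mnmE /vpos /vneg !mxE.
lia.
Qed.

Lemma edge_fw a b : scrG_edge K tau M a b -> connected (GP_edge tau M) a b.
Proof.
case=> ha [hb [rho [rho0 [s [hs hf]]]]].
have [D [hD [G [hG hEq]]]] := clear_den s hs.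
pose N := fun i => (vneg a i + vneg b i)%N.
pose E := fun i => (N i + D i)%N.
have hE0 : forall i, i \in tau -> E i = 0%N.
  move=> i hi; rewrite /E /N hD // /vneg; have := ha i hi; have := hb i hi; lia.
pose a' := fun i => absz (a i 0 + (E i)%:Z).
pose b' := fun i => absz (b i 0 + (E i)%:Z).
have ka : (xmon K E)%:F * lmon K a = (xmon K a')%:F.
  rewrite -!lprod_nat lmonE -lprodD; apply: lprod_ext => i; rewrite /a' /E /N /vneg; lia.
have kb : (xmon K E)%:F * lmon K b = (xmon K b')%:F.
  rewrite -!lprod_nat lmonE -lprodD; apply: lprod_ext => i; rewrite /b' /E /N /vneg; lia.
have heq : xmon K a' - rho%:MP * xmon K b' = xmon K N * G.
  have : (xmon K E)%:F * (lmon K a - (rho%:MP)%:F * lmon K b) = (xmon K N * G)%:F.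
    by rewrite hf /E xmonD !rmorphM /= -hEq mulrA.
  rewrite mulrBr ka mulrCA kb -!rmorphM -rmorphB => /eqP; rewrite tofrac_eq.
  by move/eqP.
have [A hA] : in_IM M (xmon K N * G) by apply: in_IM_mul.
pose cb := fun k => pb (connected (GP_edge tau M) a (shift E k)).
have := congr1 (phi cb) heq; rewrite hA phi_sum big1; last first.
  move=> j _; rewrite /binom !xmon_X; apply: phi_Xbin => k.
  apply: pb_eq; have he := shift_edge E k j hE0; split => h.
    by eapply rst_trans; [exact: h | apply: rst_step].
  by eapply rst_trans; [exact: h | apply: rst_sym; apply: rst_step].
rewrite phiB mul_mpolyC phiZ !xmon_X !phiX.
have -> : cb (mnmf a') = true.
  apply/pbE; have -> : shift E (mnmf a') = a.
    apply/matrixP => i j0; rewrite ord1 !mxE mnmE /a' /E /N /vneg; lia.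
  exact: rst_refl.
case hcb : (cb (mnmf b')).
  move: hcb => /pbE; have -> // : shift E (mnmf b') = b.
  apply/matrixP => i j0; rewrite ord1 !mxE mnmE /b' /E /N /vneg; lia.
by rewrite mulr0 subr0 => /eqP; rewrite oner_eq0.
Qed.

Lemma edge_bw a b j : inP tau a -> inP tau b -> a - b = col j M ->
  scrG_edge K tau M a b.
Proof.
move=> ha hb hab.
have hab' i : a i 0 - b i 0 = M i j.
  by have := congr1 (fun X : 'cV[int]_n => X i 0) hab; rewrite !mxE.
pose mu := col j M.
pose w := fun i => a i 0 - (vpos mu i)%:Z.
pose wp := fun i => absz (Num.max (w i) 0).
pose wn := fun i => absz (Num.max (- w i) 0).
have hw : lprod w = (xmon K wp)%:F / (xmon K wn)%:F.
  apply: (mulIf (xmonf_neq0 wn)); rewrite divfK ?xmonf_neq0 //.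
  rewrite -!lprod_nat -lprodD; apply: lprod_ext => i; rewrite /wp /wn; lia.
split=> //; split=> //; exists 1; split; first exact: oner_neq0.
exists [:: ((xmon K wp)%:F / (xmon K wn)%:F, binom K mu)]; split.
  move=> q; rewrite mem_seq1 => /eqP -> /=; split.
    exists (xmon K wp), wn; split=> //.
    move=> i hi; rewrite /wn /w /vpos /mu !mxE.
    have := ha i hi; have := hb i hi; have := hab' i; lia.
  exists (fun j' => (j' == j)%:R).
  rewrite (bigD1 j) //= eqxx mul1r big1 ?addr0 // => j' /negbTE ->.
  by rewrite mul0r.
rewrite big_seq1 /= -hw mpolyC1 rmorph1 mul1r /binom rmorphB /= -!lprod_nat !lmonE.
rewrite mulrBr -!lprodD; congr (_ - _); apply: lprod_ext => i;
  rewrite /w /vpos /vneg /mu !mxE; have := hab' i; lia.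
Qed.

End S.

Lemma conn_mono (n : nat) (E1 E2 : 'cV[int]_n -> 'cV[int]_n -> Prop) :
  (forall x y, E1 x y -> connected E2 x y) ->
  forall x y, connected E1 x y -> connected E2 x y.
Proof.
move=> h x y; elim.
- by move=> ? ? /h.
- by move=> ?; apply: rst_refl.
- by move=> ? ? _ ?; apply: rst_sym.
- by move=> ? ? ? _ ? _ ?; apply: rst_trans; eauto.
Qed.

Theorem lemma2p12 (K : fieldType) (n m : nat) (M : 'M[int]_(n, m))
    (hrank : \rank (map_mx (intr : int -> rat) M) = m)
    (tau : {set 'I_n}) (u v : 'cV[int]_n)
    (hu : inP tau u) (hv : inP tau v) :
  connected (scrG_edge K tau M) u v <-> connected (GP_edge tau M) u v.
Proof.
split; apply: conn_mono => a b.
  exact: edge_fw.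
case=> ha [hb [j [h|h]]].
  by apply: rst_step; apply: edge_bw h.
by apply: rst_sym; apply: rst_step; apply: edge_bw h.
Qed.
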